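(* Let $q$ be a power of $2$ and $n=q^2+1$. For an integer $a$ with $1\le a\le n-1$, $a\in\mathrm{MinRep}_n$ if and only if $a\in[l(q+1)+1,(l+1)(q-1)]$ for some integer $l$ with $0\le l\le\frac q2-1$. Moreover, $|C_a|=4$ for every nonzero $a\in\mathrm{MinRep}_n$.
   Context: For $0\le s\le n-1$, $C_s=\{sq^i\bmod n:i\ge0\}$ is the $q$-cyclotomic coset of $s$ modulo $n$; its least element is its coset leader; $\mathrm{MinRep}_n$ is the set of all coset leaders modulo $n$. $[u,v]$ denotes the set of integers $u,u+1,\dots,v$. *)

(* Defs.v *)
From mathcomp Require Import all_boot.
Set Implicit Arguments. Unset Strict Implicit. Unset Printing Implicit Defensive.

(* q-cyclotomic coset of s modulo n, as a finite set of residues in 'I_n.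
   The exponent i ranges over 0..n-1, which covers every i >= 0 since the
   sequence s*q^i mod n takes at most n values. *)
Definition cyc_coset (q n s : nat) : {set 'I_n} :=
  [set j : 'I_n | [exists i : 'I_n, (j : nat) == (s * q ^ i) %% n]].

Definition is_coset_leader (q n s : nat) : bool :=
  (s < n) && [forall j : 'I_n, (j \in cyc_coset q n s) ==> (s <= j)].

(* Main.v *)
Require Import Defs.
From mathcomp Require Import all_boot.
From mathcomp Require Import zify.

Lemma modE n x k r : x = k * n + r -> r < n -> x %% n = r.
Proof. by move=> -> hr; rewrite modnMDl modn_small. Qed.

Lemma modq2 q x : 0 < x < q*q+1 -> (x * q^2) %% (q*q+1) = q*q+1 - x.
Proof.
case/andP=> x0 xn; apply: (@modE _ _ x.-1); last by lia.
rewrite -mulnn; case: x x0 xn => [|y] //= _ yn; lia.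
Qed.

Lemma q4 q : 0 < q -> (q^4) %% (q*q+1) = 1.
Proof.
move=> q0; apply: (@modE _ _ (q*q).-1); last by nia.
have -> : q ^ 4 = (q*q)*(q*q) by rewrite !expnS expn0; lia.
have : 0 < q * q by nia.
case: (q*q) => [|P] //= _; lia.
Qed.

Lemma period q a i : 0 < q ->
  (a * q ^ i) %% (q*q+1) = (a * q ^ (i %% 4)) %% (q*q+1).
Proof.
move=> q0; rewrite {1}(divn_eq i 4) expnD mulnCA -modnMml.
by rewrite [i %/ 4 * 4]mulnC expnM -modnXm q4 // exp1n modnMml mul1n.
Qed.

Lemma coprime_q q : coprime (q*q+1) q.
Proof. by rewrite coprime_sym /coprime gcdnMDl gcdn1. Qed.

Lemma coprime_qm q : 2 <= q -> ~~ odd q -> coprime (q*q+1) (q-1).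
Proof.
move=> q2 ev.
have -> : q*q+1 = (q+1)*(q-1) + 2 by nia.
rewrite coprime_sym /coprime gcdnMDl -/(coprime (q-1) 2) coprime_sym coprime2n.
case: q q2 ev => [|q] // _ ev; rewrite subn1 /=; move: ev => /=; by case: (odd q).
Qed.

Lemma coprime_qp q : ~~ odd q -> coprime (q*q+1) (q+1).
Proof.
move=> ev.
case: q ev => [|q] ev //.
have -> : q.+1*q.+1+1 = (q.+1-1)*(q.+1+1) + 2 by lia.
rewrite coprime_sym /coprime gcdnMDl -/(coprime (q.+1+1) 2) coprime_sym coprime2n.
by rewrite addn1 /= ev.
Qed.

Lemma c_pos q a : 0 < a < q*q+1 -> 0 < a * q %% (q*q+1).
Proof.
case/andP=> a0 an; rewrite lt0n; apply/negP=> hd; have {hd} : (q*q+1) %| a * q := hd.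
rewrite Gauss_dvdl ?coprime_q // => /dvdn_leq; rewrite a0 => /(_ isT); lia.
Qed.

Lemma c_neq q a : 2 <= q -> ~~ odd q -> 0 < a < q*q+1 -> a * q %% (q*q+1) != a.
Proof.
move=> q2 ev /andP[a0 an]; apply/eqP => h.
have : a * q == a %[mod q*q+1] by rewrite h modn_small.
rewrite eqn_mod_dvd; last by nia.
have -> : a * q - a = a * (q - 1) by rewrite mulnBr muln1.
rewrite Gauss_dvdl ?coprime_qm // => /dvdn_leq; rewrite a0 => /(_ isT); lia.
Qed.

Lemma c_sum q a : ~~ odd q -> 0 < a < q*q+1 -> a + a * q %% (q*q+1) != q*q+1.
Proof.
move=> ev /andP[a0 an]; apply/eqP => h.
have : (a * (q+1)) %% (q*q+1) == 0.
  by rewrite mulnDr muln1 addnC -modnDmr h modnn.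
move=> hd; have {hd} : (q*q+1) %| a * (q+1) := hd.
rewrite Gauss_dvdl ?coprime_qp // => /dvdn_leq; rewrite a0 => /(_ isT); lia.
Qed.

Lemma vals q a i : 2 <= q -> 0 < a < q*q+1 ->
  (a * q ^ i) %% (q*q+1) \in [:: a; a * q %% (q*q+1); (q*q+1) - a; (q*q+1) - a * q %% (q*q+1)].
Proof.
move=> q2 ha; rewrite period; last by lia.
have : i %% 4 < 4 by rewrite ltn_mod.
case: (i %% 4) => [|[|[|[|k]]]] // _.
- by rewrite expn0 muln1 modn_small ?inE ?eqxx //; lia.
- by rewrite expn1 !inE; apply/or4P; constructor 2.
- by rewrite (modq2 _ _ ha) !inE; apply/or4P; constructor 3.
- have -> : a * q ^ 3 = a * q * q ^ 2 by rewrite !expnS expn0; lia.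
  rewrite -modnMml (modq2 q); first by rewrite !inE; apply/or4P; constructor 4.
  by rewrite c_pos ?ltn_mod //; lia.
Qed.

Lemma cosetE q a (j : 'I_(q*q+1)) : 2 <= q -> 0 < a < q*q+1 ->
  (j \in cyc_coset q (q*q+1) a) = ((j : nat) \in [:: a; a * q %% (q*q+1); (q*q+1) - a; (q*q+1) - a * q %% (q*q+1)]).
Proof.
move=> q2 ha; rewrite inE.
apply/existsP/idP.
  by case=> i /eqP ->; apply: vals.
have hn : 4 < q*q+1 by nia.
rewrite !inE => H.
have pick : forall i, i < q*q+1 -> (j : nat) = a * q ^ i %% (q*q+1) ->
    exists i0 : 'I_(q*q+1), (j : nat) == a * q ^ i0 %% (q*q+1).
  by move=> i hi e; exists (Ordinal hi); rewrite /= e.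
case/or4P: H => /eqP e.
- apply: (pick 0); first lia.
  by rewrite e expn0 muln1 modn_small //; case/andP: ha.
- apply: (pick 1); first lia.
  by rewrite e expn1.
- apply: (pick 2); first lia.
  by rewrite e (modq2 _ _ ha).
- apply: (pick 3); first lia.
  have -> : a * q ^ 3 = a * q * q ^ 2 by rewrite !expnS expn0; lia.
  rewrite -modnMml (modq2 q) ?e //.
  by rewrite c_pos ?ltn_mod //; lia.
Qed.

Lemma leaderE q a : 2 <= q -> 0 < a < q*q+1 ->
  is_coset_leader q (q*q+1) a =
  [&& a <= a * q %% (q*q+1), a <= (q*q+1) - a & a <= (q*q+1) - a * q %% (q*q+1)].
Proof.
move=> q2 ha; rewrite /is_coset_leader; case/andP: (ha) => a0 an; rewrite an /=.
have cp := c_pos _ _ ha.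
have cn : a * q %% (q*q+1) < q*q+1 by rewrite ltn_mod addn1.
apply/forallP/and3P.
- move=> H.
  have P x (hx : x < q*q+1) :
      x \in [:: a; a * q %% (q*q+1); (q*q+1) - a; (q*q+1) - a * q %% (q*q+1)] -> a <= x.
    by move=> hL; move: (H (Ordinal hx)); rewrite cosetE //= hL.
  split; apply: P; rewrite ?inE ?eqxx ?orbT //; try lia.
- case=> h1 h2 h3 j; apply/implyP; rewrite cosetE // !inE.
  by case/or4P => /eqP ->.
Qed.

Lemma cardE q a : 2 <= q -> ~~ odd q -> 0 < a < q*q+1 ->
  #|cyc_coset q (q*q+1) a| = 4.
Proof.
move=> q2 ev ha; case/andP: (ha) => a0 an.
have cp := c_pos _ _ ha.
have cn : a * q %% (q*q+1) < q*q+1 by rewrite ltn_mod addn1.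
have c1 := c_neq _ _ q2 ev ha.
have c2 := c_sum _ _ ev ha.
have nodd : odd (q*q+1) by rewrite addn1 /= oddM (negbTE ev).
set c := a * q %% (q*q+1) in cp cn c1 c2.
set L := [:: a; c; (q*q+1) - a; (q*q+1) - c].
have h2a : a + a != q*q+1 by apply/eqP=> h; move: nodd; rewrite -h addnn odd_double.
have h2c : c + c != q*q+1 by apply/eqP=> h; move: nodd; rewrite -h addnn odd_double.
have uL : uniq L.
  rewrite /L /= !inE; lia.
pose s := pmap insub L : seq 'I_(q*q+1).
have us : uniq s by apply: pmap_sub_uniq.
have sz : size s = 4.
  rewrite size_pmap_sub.
  have : all (fun x => x < q*q+1) L by rewrite /L /= an cn; apply/and3P; split => //; lia.
  by rewrite all_count => /eqP ->.
have -> : cyc_coset q (q*q+1) a = [set x in s].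
  by apply/setP=> j; rewrite [RHS]inE mem_pmap_sub cosetE.
by rewrite cardsE (card_uniqP us).
Qed.


Lemma modE' n x k r : x + n = k * n + r -> r < n -> x %% n = r.
Proof. by move=> e hr; rewrite -modnDr e modnMDl modn_small. Qed.

Lemma arith q a : 2 <= q -> ~~ odd q -> 0 < a < q*q+1 ->
  [&& a <= a*q %% (q*q+1), a <= (q*q+1) - a & a <= (q*q+1) - a*q %% (q*q+1)] <->
  exists l, l <= q %/ 2 - 1 /\ l*(q+1)+1 <= a <= (l+1)*(q-1).
Proof.
move=> q2 ev /andP[a0 an].
have qe : q = q %/ 2 * 2 by rewrite {1}(divn_eq q 2) modn2 (negbTE ev) addn0.
set h := q %/ 2 in qe *.
have uv := divn_eq a q. set u := a %/ q in uv *. set v := a %% q in uv *.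
have vq : v < q by rewrite ltn_mod; lia.
clearbody u v h.
have qq : q * q = 2 * (h * q) by rewrite {1}qe; lia.
have u2 : u * 2 <= u * q by rewrite leq_mul2l q2 orbT.
have back : forall l, l*(q+1)+1 <= a <= (l+1)*(q-1) -> u = l.
  move=> l /andP[b1 b2].
  have e : (l+1)*(q-1) = l*q + q - l - 1 by rewrite mulnBr muln1 mulnDl mul1n; lia.
  rewrite e in b2.
  case: (ltngtP u l) => [ul|lu|//].
  - have : u.+1 * q <= l*q by rewrite leq_mul2r ul orbT.
    lia.
  - have : l.+1 * q <= u*q by rewrite leq_mul2r lu orbT.
    lia.
have [hA|hB] := leqP u (v*q).
- have cE : a*q %% (q*q+1) = v*q - u.
    apply: (@modE _ _ u); first by rewrite {1}uv; lia.
    have : v * q < q * q by rewrite ltn_pmul2r; lia.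
    lia.
  rewrite cE; split.
  + case/and3P=> h1 h2 h3.
    have vu : u < v.
      rewrite ltnNge; apply/negP => vu.
      have : v*q <= u*q by rewrite leq_mul2r vu orbT.
      move=> hh; have u0 : u = 0 by lia.
      by move: uv; rewrite u0 mul0n add0n; lia.
    have uq : u <= q.
      rewrite leqNgt; apply/negP => uq.
      have : q.+1 * q <= u*q by rewrite leq_mul2r uq orbT.
      lia.
    have vu2 : v < q - u.
      rewrite ltnNge; apply/negP => hv.
      have : (q-u)*q <= v*q by rewrite leq_mul2r hv orbT.
      rewrite mulnBl => hq.
      have uqq : u * q <= q * q by rewrite leq_mul2r uq orbT.
      have hu : h <= u by lia.
      have : h*q <= u*q by rewrite leq_mul2r hu orbT.
      lia.
    exists u; split; first lia.
    have e : (u+1)*(q-1) = u*q + q - u - 1 by rewrite mulnBr muln1 mulnDl mul1n; lia.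
    rewrite e; lia.
  + case=> l [hl hb].
    have ul := back l hb. rewrite -ul in hl hb.
    have e : (u+1)*(q-1) = u*q + q - u - 1 by rewrite mulnBr muln1 mulnDl mul1n; lia.
    rewrite e in hb.
    have vu : u < v by lia.
    have vu2 : u + v < q by lia.
    have k1 : u.+1 * q <= v * q by rewrite leq_mul2r vu orbT.
    have k2 : (u.+1 * 2) * q <= q * q by rewrite leq_mul2r orbC; apply/orP; left; lia.
    have k3 : (u + v).+1 * q <= q * q by rewrite leq_mul2r vu2 orbT.
    apply/and3P; split; lia.
- have cE : a*q %% (q*q+1) = q*q+1 + v*q - u.
    apply: (@modE' _ _ u); first by rewrite {1}uv; lia.
    lia.
  rewrite cE; split.
  + case/and3P=> h1 h2 h3. lia.
  + case=> l [hl hb].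
    have ul := back l hb. rewrite -ul in hl hb.
    have e : (u+1)*(q-1) = u*q + q - u - 1 by rewrite mulnBr muln1 mulnDl mul1n; lia.
    rewrite e in hb.
    have : q <= v * q by rewrite leq_pmull; lia.
    lia.
Qed.

Theorem lemma8 (m : nat) (hm : 1 <= m) :
  let q := 2 ^ m in
  let n := q ^ 2 + 1 in
  (forall a : nat, 1 <= a <= n - 1 ->
     (is_coset_leader q n a <->
      exists l : nat, l <= q %/ 2 - 1 /\ l * (q + 1) + 1 <= a <= (l + 1) * (q - 1)))
  /\ (forall a : nat, 0 < a -> is_coset_leader q n a -> #|cyc_coset q n a| = 4).
Proof.
case: m hm => [|k] // _ q n.
have q2 : 2 <= q.
  rewrite /q expnS.
  have : 0 < 2 ^ k by rewrite expn_gt0.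
  lia.
have ev : ~~ odd q.
  by rewrite /q expnS oddM.
have nE : n = q * q + 1 by rewrite /n mulnn.
rewrite nE; split.
- move=> a ha.
  have ha' : 0 < a < q*q+1 by lia.
  rewrite (leaderE _ _ q2 ha').
  exact: arith.
- move=> a a0 hl.
  have an : a < q*q+1 by case/andP: hl.
  apply: cardE => //; lia.
Qed.
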